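(* Let $k$ be a positive integer and $n_0,\ldots,n_{k-1}$ positive integers, with indices read modulo $k$. For each $j\in\{0,\ldots,k-1\}$ let $A^{(j)}$ be a real $n_j\times n_{j+1}$ matrix. Suppose the signed digraph $G_{A^{(0)}A^{(1)}\cdots A^{(k-1)}}$ contains an e-cycle. Then there exist matrices in $\mathcal{Q}(A^{(0)})\mathcal{Q}(A^{(1)})\cdots\mathcal{Q}(A^{(k-1)})$ which are not $P_0$-matrices.
   Context: Indices $j$ are taken modulo $k$. For a real matrix $M$, $\mathcal{Q}(M)$ is the set of real matrices $X$ of the same dimensions with $M_{ij}>0\Rightarrow X_{ij}>0$, $M_{ij}<0\Rightarrow X_{ij}<0$, $M_{ij}=0\Rightarrow X_{ij}=0$, and $\mathcal{Q}(A^{(0)})\cdots\mathcal{Q}(A^{(k-1)})=\{B^{(0)}\cdots B^{(k-1)} : B^{(j)}\in\mathcal{Q}(A^{(j)})\}$. The signed digraph $G=G_{A^{(0)}\cdots A^{(k-1)}}$ has vertex set the disjoint union of $V_0,\ldots,V_{k-1}$ with $V_j=\{V_j^1,\ldots,V_j^{n_j}\}$; there is a directed edge from $V_j^r$ to $V_{j+1}^s$ iff $(A^{(j)})_{rs}\neq 0$, with the sign of $(A^{(j)})_{rs}$; no other edges (loops allowed when $k=1$). A cycle means a directed cycle; every cycle has length a multiple of $k$. A cycle with $kr_1$ edges, $r_2$ of them negative, is an e-cycle if $(-1)^{r_1+r_2}=1$ and an o-cycle otherwise. A $P_0$-matrix is a real square matrix all of whose principal minors are nonnegative. *)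

(* Defs.v *)
From HB Require Import structures.
From mathcomp Require Import all_boot all_order all_algebra.
From mathcomp Require Import reals.
Set Implicit Arguments. Unset Strict Implicit. Unset Printing Implicit Defensive.
Import Order.TTheory GRing.Theory Num.Theory.
Local Open Scope ring_scope.

Section Defs.
Variable R : realType.

Definition qual_class (p q : nat) (M X : 'M[R]_(p, q)) : Prop :=
  forall i j, Num.sg (X i j) = Num.sg (M i j).

(* entry of a matrix at natural indices (0 outside the range) *)
Definition ent (p q : nat) (M : 'M[R]_(p, q)) (r s : nat) : R :=
  match @insub nat (fun x => x < p)%N _ r, @insub nat (fun x => x < q)%N _ s with
  | Some i, Some j => M i j
  | _, _ => 0
  end.

(* Block indices j = 0..k-1 are naturals; dimensions n : nat -> nat with
   n k = n 0 (indices mod k); A j : n_j x n_(j+1). *)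
Variables (k : nat) (n : nat -> nat).

Fixpoint chain (B : forall j : nat, 'M[R]_(n j, n j.+1)) (m : nat)
  : 'M[R]_(n 0, n m) :=
  match m with
  | 0 => 1%:M
  | m'.+1 => chain B m' *m B m'
  end.

Variable A : forall j : nat, 'M[R]_(n j, n j.+1).

(* vertices of G are pairs (j, r) meaning V_j^r (0-based r);
   edge from (j,r) to ((j+1) mod k, s) iff A^(j)_{rs} <> 0 *)
Definition edge_val (u v : nat * nat) : R := ent (A u.1) u.2 v.2.

Definition sdedge : rel (nat * nat) := fun u v =>
  [&& (u.1 < k)%N, v.1 == (u.1.+1 %% k)%N & edge_val u v != 0].

Definition is_dcycle (c : seq (nat * nat)) : bool :=
  [&& c != [::], uniq c & cycle sdedge c].

Definition cycle_edges (c : seq (nat * nat)) := zip c (rot 1 c).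

Definition num_neg (c : seq (nat * nat)) : nat :=
  count (fun e => edge_val e.1 e.2 < 0) (cycle_edges c).

(* length = k * r1, r2 negative edges, e-cycle iff (-1)^(r1+r2) = 1 *)
Definition is_ecycle (c : seq (nat * nat)) : bool :=
  is_dcycle c && ~~ odd ((size c %/ k) + num_neg c)%N.

End Defs.

Definition principal_minor (R : realType) (p : nat) (M : 'M[R]_p)
  (s : {set 'I_p}) : R :=
  \det (mxsub (@enum_val _ (mem s)) (@enum_val _ (mem s)) M).

Definition P0_matrix (R : realType) (p : nat) (M : 'M[R]_p) : Prop :=
  forall s : {set 'I_p}, 0 <= principal_minor M s.

(* Main.v *)
Require Import Defs.
From HB Require Import structures.
From mathcomp Require Import all_boot all_order all_algebra all_fingroup.
From mathcomp Require Import reals polyrcf.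
Import Order.TTheory GRing.Theory Num.Theory.
Local Open Scope ring_scope.
Set Implicit Arguments. Unset Strict Implicit.

Section Ent.
Variable R : realType.
Lemma ent_nz p q (M : 'M[R]_(p,q)) r s : ent M r s != 0 -> (r < p)%N && (s < q)%N.
Proof.
rewrite /ent; case: (insubP 'I_p r) => [i ri _|]; case: (insubP 'I_q s) => [j sj _|] //=;
  rewrite ?ri ?sj ?eqxx //.
Qed.
Lemma entE p q (M : 'M[R]_(p,q)) (i : 'I_p) (j : 'I_q) : ent M i j = M i j.
Proof.
rewrite /ent; case: (insubP 'I_p i) => [i' _ /val_inj ->|]; last by rewrite ltn_ord.
by case: (insubP 'I_q j) => [j' _ /val_inj ->|]; last by rewrite ltn_ord.
Qed.
Lemma ent_out p q (M : 'M[R]_(p,q)) r s : ~~ ((r < p)%N && (s < q)%N) -> ent M r s = 0.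
Proof. by apply: contraNeq => /ent_nz. Qed.
Lemma ent_mul p q t (X : 'M[R]_(p,q)) (Y : 'M[R]_(q,t)) r s :
  ent (X *m Y) r s = \sum_(x < q) ent X r x * ent Y x s.
Proof.
case: (boolP ((r < p)%N && (s < t)%N)) => [/andP[rp st]|h].
  rewrite -[r]/(val (Ordinal rp)) -[s]/(val (Ordinal st)) entE mxE.
  by apply: eq_bigr => x _; rewrite !entE.
rewrite ent_out // big1 // => x _.
case/nandP: h => h; first by rewrite (ent_out X) ?mul0r // (negPf h).
by rewrite (ent_out Y) ?mulr0 // (negPf h) andbF.
Qed.
End Ent.

Lemma cycle_nth_mod (T : Type) (x0 : T) (e : rel T) (c : seq T) :
  (0 < size c)%N -> path.cycle e c ->
  forall i, e (nth x0 c (i %% size c)) (nth x0 c (i.+1 %% size c)).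
Proof.
move=> Lp; rewrite (cycle_path x0) => /(pathP x0) hp i.
set j := (i %% size c)%N.
have jlt : (j < size c)%N by rewrite ltn_mod.
have hS : (i.+1 %% size c = j.+1 %% size c)%N by rewrite -[i.+1]addn1 -[j.+1]addn1 modnDml.
rewrite hS.
case: (ltnP j.+1 (size c)) => hj.
  by rewrite (modn_small hj); have := hp j.+1 hj.
have ej : j.+1 = size c by apply/eqP; rewrite eqn_leq hj jlt.
rewrite ej modnn.
have := hp 0%N Lp; rewrite [nth _ (_ :: _) _]/= -nth_last.
by have -> : (size c).-1 = j by rewrite -ej.
Qed.

Lemma prod_shift (R : comPzRingType) L (f : nat -> R) b : (0 < L)%N ->
  (forall m, f (m %% L)%N = f m) ->
  \prod_(j < L) f (b + j)%N = \prod_(j < L) f j.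
Proof.
move=> Lp hf.
pose h (j : 'I_L) : 'I_L := Ordinal (ltn_pmod (b + j) Lp).
have hinj : injective h.
  move=> x y /(congr1 val) /= /eqP; rewrite eqn_modDl !modn_small ?ltn_ord //.
  by move/eqP/val_inj.
rewrite [RHS](reindex_inj hinj) /=; apply: eq_bigr => j _; by rewrite hf.
Qed.

Lemma prod_sg (R : realType) (T : Type) (g : T -> R) (s : seq T) :
  all (fun e => g e != 0) s ->
  \prod_(e <- s) Num.sg (g e) = (-1) ^+ count (fun e => g e < 0) s.
Proof.
elim: s => [|e s IH] /=; first by rewrite big_nil.
case/andP => ge hs; rewrite big_cons IH // exprD.
congr (_ * _).
case: (ltrgtP (g e) 0) => h; first by rewrite ltr0_sg.
  by rewrite gtr0_sg.
by move: ge; rewrite h eqxx.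
Qed.
Lemma prod_block (R : comPzRingType) (f : nat -> R) r k :
  \prod_(t < r) \prod_(i < k) f (t * k + i)%N = \prod_(0 <= j < r * k) f j.
Proof.
elim: r => [|r IH]; first by rewrite big_ord0 mul0n big_geq.
rewrite big_ord_recr /= IH mulSnr [in RHS](big_cat_nat (n := (r * k)%N)) ?leq_addr //=.
congr (_ * _).
rewrite -{2}[(r * k)%N]add0n big_addn addKn big_mkord.
by apply: eq_bigr => i _; rewrite addnC.
Qed.
Section Cyc.
Variables (R : realType) (k : nat) (n : nat -> nat).
Variable A : forall j : nat, 'M[R]_(n j, n j.+1).
Variable c : seq (nat * nat).
Hypothesis hk : (0 < k)%N.
Hypothesis hc : is_ecycle k A c.

Definition x0 : nat * nat := (0%N, 0%N).
Definition vv i := nth x0 c (i %% size c).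

Lemma Lpos : (0 < size c)%N.
Proof. by move: hc => /andP[/and3P[] + _ _ _]; case: c. Qed.

Lemma vv_mod m : vv (m %% size c) = vv m.
Proof. by rewrite /vv modn_mod. Qed.

Lemma vvS_mod i j : (i %% size c = j %% size c)%N -> vv i.+1 = vv j.+1.
Proof.
move=> h; by rewrite -vv_mod -[in RHS]vv_mod -[i.+1]addn1 -[j.+1]addn1 -modnDml h modnDml.
Qed.

Lemma vv_small i : (i < size c)%N -> vv i = nth x0 c i.
Proof. by move=> h; rewrite /vv modn_small. Qed.

Lemma vv_edge i : sdedge k A (vv i) (vv i.+1).
Proof.
move: hc => /andP[/and3P[_ _ hcy] _].
exact: (cycle_nth_mod x0 Lpos hcy).
Qed.

Lemma vv_layer i : (vv i).1 = (((vv 0).1 + i) %% k)%N.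
Proof.
elim: i => [|i IH].
  by rewrite addn0 modn_small //; move: (vv_edge 0) => /and3P[].
move: (vv_edge i) => /and3P[_ /eqP -> _].
by rewrite IH -addn1 modnDml addn1 addnS.
Qed.

Lemma vv_inj i j : vv i = vv j -> (i %% size c = j %% size c)%N.
Proof.
move: hc => /andP[/and3P[_ hu _] _] => h; apply/eqP.
by rewrite -(nth_uniq x0 _ _ hu) ?ltn_mod ?Lpos //; apply/eqP.
Qed.

Lemma nth_rot1 j : (j < size c)%N -> nth x0 (rot 1 c) j = vv j.+1.
Proof.
rewrite /vv; case: c => [|h t] //= hj.
rewrite rot1_cons nth_rcons.
case: ltnP => hjt.
  by rewrite modn_small ?ltnS.
have ej : j = size t by apply/eqP; rewrite eqn_leq hjt andbT -ltnS.
by rewrite ej eqxx modnn.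
Qed.

Lemma nth_edges j : (j < size c)%N ->
  nth (x0, x0) (cycle_edges c) j = (vv j, vv j.+1).
Proof.
move=> hj; rewrite /cycle_edges nth_zip; last by rewrite size_rot.
by rewrite nth_rot1 // (vv_small hj).
Qed.

Lemma size_edges : size (cycle_edges c) = size c.
Proof. by rewrite /cycle_edges size_zip size_rot minnn. Qed.

Lemma vv_mem i : (vv i, vv i.+1) \in cycle_edges c.
Proof.
rewrite -vv_mod (vvS_mod (j := i %% size c)) ?modn_mod //.
rewrite -nth_edges ?ltn_mod ?Lpos //; apply: mem_nth.
by rewrite size_edges ltn_mod Lpos.
Qed.

Lemma edge_succ i y : (vv i, y) \in cycle_edges c -> y = vv i.+1.
Proof.
move=> /(nthP (x0, x0)) [j]; rewrite size_edges => hj.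
rewrite nth_edges // => -[/vv_inj h <-].
by apply: vvS_mod; rewrite h.
Qed.

Lemma ev_nz i : edge_val A (vv i) (vv i.+1) != 0.
Proof. by move: (vv_edge i) => /and3P[]. Qed.

End Cyc.
Section Cyc2.
Variables (R : realType) (k : nat) (n : nat -> nat).
Variable A : forall j : nat, 'M[R]_(n j, n j.+1).
Variable c : seq (nat * nat).
Hypothesis hk : (0 < k)%N.
Hypothesis hc : is_ecycle k A c.

Notation vv := (vv c).
Definition bb := (k - (vv 0).1)%N.
Definition uu i := vv (bb + i).

Lemma vv0_lt : ((vv 0).1 < k)%N.
Proof. by move: (vv_edge hc 0) => /and3P[]. Qed.

Lemma uu_layer i : (uu i).1 = (i %% k)%N.
Proof.
rewrite /uu (vv_layer hc) addnA /bb subnKC; last exact: ltnW vv0_lt.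
by rewrite modnDl.
Qed.

Lemma uu_edge i : sdedge k A (uu i) (uu i.+1).
Proof. by rewrite /uu addnS; exact: (vv_edge hc). Qed.

Lemma uu_nz i : edge_val A (uu i) (uu i.+1) != 0.
Proof. by rewrite /uu addnS; exact: (ev_nz hc). Qed.

Lemma uu_mem i : (uu i, uu i.+1) \in cycle_edges c.
Proof. by rewrite /uu addnS; exact: (vv_mem hc). Qed.

Lemma uu_succ i y : (uu i, y) \in cycle_edges c -> y = uu i.+1.
Proof. by rewrite /uu addnS; exact: (edge_succ hc). Qed.

Lemma uu_inj i j : uu i = uu j -> (i %% size c = j %% size c)%N.
Proof. by move/(vv_inj hc)/eqP; rewrite eqn_modDl => /eqP. Qed.

Lemma uu_parity :
  \prod_(j < size c) Num.sg (edge_val A (uu j) (uu j.+1)) = (-1) ^+ num_neg A c.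
Proof.
have Lp := Lpos hc.
pose f m := Num.sg (edge_val A (vv m) (vv m.+1)).
transitivity (\prod_(j < size c) f (bb + j)%N).
  by apply: eq_bigr => j _; rewrite /f /uu addnS.
rewrite prod_shift //; last first.
  move=> m; rewrite /f vv_mod (vvS_mod (j := m)) // modn_mod //.
rewrite /num_neg -prod_sg; last first.
  apply/allP => e /(nthP (x0, x0)) [j]; rewrite size_edges => hj <-.
  by rewrite nth_edges //= (ev_nz hc).
rewrite (big_nth (x0, x0)) big_mkord size_edges.
by apply: eq_bigr => j _; rewrite nth_edges.
Qed.

End Cyc2.
Section Main.
Variables (R : realType) (k : nat) (n : nat -> nat).
Variable A : forall j : nat, 'M[R]_(n j, n j.+1).
Variable c : seq (nat * nat).
Hypothesis hk : (0 < k)%N.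
Hypothesis hc : is_ecycle k A c.

Notation u := (uu k c).
Notation L := (size c).
Definition ev i := edge_val A (u i) (u i.+1).

Lemma u_mod m : u (m %% L) = u m.
Proof. by rewrite /uu -(vv_mod c (bb k c + _)) modnDmr vv_mod. Qed.

Lemma src_lt i : ((u i).2 < n (u i).1)%N.
Proof. by have /ent_nz/andP[] := uu_nz hc i. Qed.

Lemma tgt_lt i : ((u i.+1).2 < n (u i).1.+1)%N.
Proof. by have /ent_nz/andP[] := uu_nz hc i. Qed.

Lemma layerS i : (u i.+1).1 = ((u i).1.+1 %% k)%N.
Proof. by have /and3P[_ /eqP -> _] := uu_edge hc i. Qed.

Lemma layer_small t m : (m < k)%N -> (u (t * k + m)).1 = m.
Proof. by move=> hm; rewrite (uu_layer hc) modnMDl modn_small. Qed.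

Lemma k_dvd_L : (k %| L)%N.
Proof.
have := uu_layer hc L; rewrite -u_mod modnn (uu_layer hc) mod0n.
by move=> h; rewrite /dvdn -h.
Qed.

Definition r1 := (L %/ k)%N.
Lemma L_eq : L = (r1 * k)%N.
Proof. by rewrite divnK // k_dvd_L. Qed.
Lemma r1_pos : (0 < r1)%N.
Proof. by have := Lpos hc; rewrite L_eq muln_gt0 => /andP[]. Qed.

Definition inC j (r s : nat) := ((j, r), ((j.+1 %% k)%N, s)) \in cycle_edges c.
Definition Bm (e : R) j : 'M[R]_(n j, n j.+1) :=
  \matrix_(r, s) ((if inC j r s then 1 else e) * Num.sg (A j r s)).

Lemma entC i s : ent (Bm 0 (u i).1) (u i).2 s =
  if s == (u i.+1).2 then Num.sg (ev i) else 0.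
Proof.
have hr := src_lt i.
case: (ltnP s (n (u i).1.+1)) => hs; last first.
  rewrite ent_out; last by rewrite hr /= -leqNgt.
  case: eqP => // es; move: hs; rewrite es leqNgt tgt_lt //.
rewrite -[(u i).2]/(val (Ordinal hr)) -[s]/(val (Ordinal hs)) entE mxE /=.
rewrite /inC -layerS.
have E : ((u i).1, (u i).2) = u i by rewrite -surjective_pairing.
rewrite E.
case: ifP => hin.
  have hy := uu_succ hc hin.
  rewrite -hy eqxx mul1r /ev -hy /edge_val /= -[(u i).2]/(val (Ordinal hr)) -[s]/(val (Ordinal hs)) entE //.
rewrite mul0r; case: eqP => // es.
have : ((u i.+1).1, s) = u i.+1 by rewrite es -surjective_pairing.
by move=> E2; move: hin; rewrite E2 (uu_mem hc).
Qed.


Hypothesis hnk : n k = n 0%N.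

Definition W t m := \prod_(i < m) Num.sg (ev (t * k + i)%N).
Definition a t := (u (t * k)%N).2.

Lemma layer0 t : (u (t * k)%N).1 = 0%N.
Proof. by have := layer_small t hk; rewrite addn0. Qed.

Lemma a_lt t : (a t < n 0)%N.
Proof. by have := src_lt (t * k); rewrite layer0. Qed.

Lemma chainC t m : (m <= k)%N -> forall s,
  ent (chain (Bm 0) m) (a t) s = if s == (u (t * k + m)%N).2 then W t m else 0.
Proof.
elim: m => [_|m IH hm] s.
  rewrite /= addn0 /W big_ord0.
  case: (ltnP s (n 0)) => hs; last first.
    rewrite ent_out; last by rewrite [(s < _)%N]ltnNge hs andbF.
    by case: eqP => // es; move: hs; rewrite es leqNgt a_lt.
  rewrite -[a t]/(val (Ordinal (a_lt t))) -[s]/(val (Ordinal hs)) entE mxE /=.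
  rewrite -(inj_eq val_inj) /= eq_sym /a.
  by case: eqP.
have hm' : (m < k)%N by [].
have hl : (u (t * k + m)%N).1 = m := layer_small t hm'.
have hb : ((u (t * k + m)%N).2 < n m)%N by rewrite -[in n m]hl src_lt.
rewrite [chain _ m.+1]/= ent_mul (bigD1 (Ordinal hb)) //= IH ?(ltnW hm') // eqxx.
rewrite big1 ?addr0; last first.
  move=> x hx; rewrite IH ?(ltnW hm') //; case: eqP => [ex|]; last by rewrite mul0r.
  by move: hx; rewrite (_ : x = Ordinal hb) ?eqxx //; apply: val_inj.
have := entC (t * k + m) s; rewrite hl => ->.
rewrite addnS /W big_ord_recr /=.
by case: eqP => _; rewrite ?mulr0.
Qed.

Definition M0 (e : R) : 'M[R]_(n 0) := castmx (erefl (n 0%N), hnk) (chain (Bm e) k).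

Definition aO t : 'I_(n 0) := Ordinal (a_lt t).

Lemma M0E t y : M0 0 (aO t) y = if val y == a t.+1 then W t k else 0.
Proof.
rewrite /M0 castmxE -entE /=.
by rewrite (chainC t (leqnn k)) /a mulSnr.
Qed.

Lemma a_eq t t' : (a t == a t') = (t %% r1 == t' %% r1)%N.
Proof.
apply/idP/idP.
  move=> /eqP h.
  have e1 : u (t * k)%N = u (t' * k)%N.
    by rewrite [u (t * k)%N]surjective_pairing [u (t' * k)%N]surjective_pairing !layer0 -/(a t) -/(a t') h.
  have := uu_inj hc e1. rewrite L_eq -!muln_modl. move/eqP. rewrite eqn_pmul2r //.
move=> /eqP h; rewrite /a -[u (t * k)%N]u_mod -[u (t' * k)%N]u_mod L_eq -!muln_modl h.
by [].
Qed.

Lemma aO_congr t t' : (t %% r1 = t' %% r1)%N -> aO t = aO t'.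
Proof. by move=> h; apply: val_inj => /=; apply/eqP; rewrite a_eq h. Qed.


Definition S : {set 'I_(n 0)} := [set aO (val t) | t : 'I_r1].

Lemma aO_inS t : aO t \in S.
Proof.
apply/imsetP; exists (Ordinal (ltn_pmod t r1_pos)) => //.
by apply: aO_congr; rewrite /= modn_mod.
Qed.

Lemma inS x : x \in S -> exists t, x = aO t.
Proof. by case/imsetP => t _ ->; exists (val t). Qed.

Lemma aO_inj_r1 t t' : (t < r1)%N -> (t' < r1)%N -> aO t = aO t' -> t = t'.
Proof.
move=> ht ht' /(congr1 val) /= /eqP; rewrite a_eq !modn_small //.
by move/eqP.
Qed.

Lemma card_S : #|S| = r1.
Proof.
rewrite card_imset ?card_ord //.
by move=> x y h; apply: val_inj; exact: (aO_inj_r1 (ltn_ord x) (ltn_ord y) h).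
Qed.

Definition tof (x : 'I_(n 0)) : nat :=
  if [pick t : 'I_r1 | x == aO t] is Some t then val t else 0%N.

Lemma tofP x : x \in S -> x = aO (tof x).
Proof.
move=> /inS [t ->]; rewrite /tof; case: pickP => [t' /eqP //| h].
have e : aO t = aO (t %% r1) by apply: aO_congr; rewrite modn_mod.
by have := h (Ordinal (ltn_pmod t r1_pos)); rewrite /= -e eqxx.
Qed.

Lemma tof_lt x : (tof x < r1)%N.
Proof. by rewrite /tof; case: pickP => [t _|_]; [exact: ltn_ord | exact: r1_pos]. Qed.

Lemma tof_aO t : (t < r1)%N -> tof (aO t) = t.
Proof.
move=> ht; apply: aO_inj_r1 => //; first exact: tof_lt.
by rewrite -tofP // aO_inS.
Qed.

Lemma aO_tofS x : x \in S -> aO (tof x).+1 = aO (tof x).+1.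
Proof. by []. Qed.

Definition nxt x := aO (tof x).+1.

Lemma nxt_aO t : nxt (aO t) = aO t.+1.
Proof.
rewrite /nxt; apply: aO_congr.
have := tofP (aO_inS t) => /(congr1 val) /= /eqP; rewrite a_eq => /eqP h.
by rewrite -addn1 -modnDml -h modnDml addn1.
Qed.

Definition aS := aO_inS 0.

Definition sigf (y : 'I_#|S|) : 'I_#|S| := enum_rank_in aS (nxt (enum_val y)).

Lemma sigf_inj : injective sigf.
Proof.
move=> y z /(congr1 enum_val); rewrite /sigf !enum_rankK_in ?aO_inS //.
rewrite (tofP (enum_valP y)) (tofP (enum_valP z)) !nxt_aO => h.
have e1 : tof (enum_val y) = tof (enum_val z).
  move: h => /(congr1 val) /= /eqP; rewrite a_eq -[(tof (enum_val y)).+1]addn1 -[(tof (enum_val z)).+1]addn1 eqn_modDr !modn_small ?tof_lt //.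
  by move/eqP.
apply: enum_val_inj.
by rewrite (tofP (enum_valP y)) (tofP (enum_valP z)) e1.
Qed.

Definition sig : {perm 'I_#|S|} := perm sigf_inj.

Notation E := (@enum_val _ (mem S)).

Lemma MS_eq : mxsub E E (M0 0) = diag_mx (\row_y W (tof (E y)) k) *m perm_mx sig.
Proof.
apply/matrixP => y z; rewrite mul_diag_mx !mxE permE /sigf.
rewrite {1}(tofP (enum_valP y)) M0E.
rewrite -(inj_eq enum_val_inj) enum_rankK_in ?aO_inS //.
rewrite /nxt -(inj_eq val_inj) /= eq_sym.
by case: eqP; rewrite ?mulr1 ?mulr0.
Qed.


Lemma sig_iter t : iter t sig (enum_rank_in aS (aO 0)) = enum_rank_in aS (aO t).
Proof.
elim: t => //= t IH.
by rewrite IH permE /sigf enum_rankK_in ?aO_inS // nxt_aO.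
Qed.

Lemma porbits1 : #|porbits sig| = 1%N.
Proof.
have all_in y : y \in porbit sig (enum_rank_in aS (aO 0)).
  apply/porbitP; have [t Et] := inS (enum_valP y).
  by exists t; rewrite permX sig_iter -Et enum_valK_in.
have -> : porbits sig = [set porbit sig (enum_rank_in aS (aO 0))].
  apply/setP => P; rewrite inE; apply/imsetP/eqP => [[y _ ->]|->].
    by apply/eqP; rewrite eq_porbit_mem.
  by exists (enum_rank_in aS (aO 0)).
by rewrite cards1.
Qed.

Lemma det_MS : \det (mxsub E E (M0 0)) = -1.
Proof.
rewrite MS_eq det_mulmx det_diag det_perm.
have -> : \prod_(y < #|S|) (\row_y1 W (tof (E y1)) k) 0 y = (-1) ^+ num_neg A c.
  transitivity (\prod_(y < #|S|) W (tof (E y)) k).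
    by apply: eq_bigr => y _; rewrite mxE.
  rewrite -(big_enum_val (fun x => W (tof x) k)).
  rewrite big_imset /=; last first.
    by move=> x y _ _ h; apply: val_inj; exact: (aO_inj_r1 (ltn_ord x) (ltn_ord y) h).
  transitivity (\prod_(t < r1) W t k).
    by apply: eq_bigr => t _; rewrite tof_aO.
  rewrite /W (prod_block (fun j => Num.sg (ev j))) big_mkord -L_eq.
  exact: (uu_parity hc).
rewrite /odd_perm porbits1 card_ord card_S.
move: hc => /andP[_]; rewrite -/r1 oddD -signr_odd.
by case: (odd r1); case: (odd (num_neg A c)); rewrite //= ?expr0 ?expr1 ?mulr1 ?mul1r ?mulN1r ?opprK.
Qed.

End Main.
Fixpoint chainT (T : comNzRingType) (n : nat -> nat)
  (B : forall j : nat, 'M[T]_(n j, n j.+1)) (m : nat) : 'M[T]_(n 0%N, n m) :=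
  match m with
  | 0 => 1%:M
  | m'.+1 => chainT B m' *m B m'
  end.

Lemma chainTE (R : realType) n (B : forall j : nat, 'M[R]_(n j, n j.+1)) m :
  chain B m = chainT B m.
Proof. by elim: m => //= m ->. Qed.

Lemma chainT_ext (T : comNzRingType) n (B1 B2 : forall j : nat, 'M[T]_(n j, n j.+1)) m :
  (forall j, B1 j = B2 j) -> chainT B1 m = chainT B2 m.
Proof. by move=> h; elim: m => //= m ->; rewrite h. Qed.

Lemma map_chainT (T1 T2 : comNzRingType) (f : {rmorphism T1 -> T2}) n
  (B : forall j : nat, 'M[T1]_(n j, n j.+1)) m :
  map_mx f (chainT B m) = chainT (fun j => map_mx f (B j)) m.
Proof. by elim: m => [|m IH] /=; [exact: map_mx1 | rewrite map_mxM IH]. Qed.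

Section Fin.
Variables (R : realType) (k : nat) (n : nat -> nat).
Variable A : forall j : nat, 'M[R]_(n j, n j.+1).
Variable c : seq (nat * nat).
Hypothesis hk : (0 < k)%N.
Hypothesis hc : is_ecycle k A c.
Hypothesis hnk : n k = n 0%N.

Definition Bp j : 'M[{poly R}]_(n j, n j.+1) :=
  \matrix_(r, s) ((if inC k c j r s then 1 else 'X) * (Num.sg (A j r s))%:P).

Lemma Bp_eval e j : map_mx (horner_eval e) (Bp j) = Bm k A c e j.
Proof.
apply/matrixP => r s; rewrite !mxE horner_evalE hornerM hornerC.
by case: ifP => _; rewrite ?hornerX ?hornerC.
Qed.

Definition pp : {poly R} :=
  \det (mxsub (@enum_val _ (mem (S hk hc))) (@enum_val _ (mem (S hk hc)))
    (castmx (erefl (n 0%N), hnk) (chainT Bp k))).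

Lemma pp_eval e : pp.[e] =
  principal_minor (castmx (erefl (n 0%N), hnk) (chain (Bm k A c e) k)) (S hk hc).
Proof.
rewrite /pp -horner_evalE -det_map_mx /principal_minor; congr (\det _).
apply/matrixP => i j; rewrite !mxE !castmxE /= chainTE.
rewrite (chainT_ext _ (fun j => esym (Bp_eval e j))) -map_chainT mxE //.
Qed.

Lemma pp0 : pp.[0] = -1.
Proof. by rewrite pp_eval; exact: (det_MS hk hc hnk). Qed.

End Fin.

Unset Implicit Arguments.

Theorem corollary6 (R : realType) (k : nat) (n : nat -> nat)
  (hk : (0 < k)%N) (hn : forall j, (j < k)%N -> (0 < n j)%N)
  (hnk : n k = n 0%N)
  (A : forall j : nat, 'M[R]_(n j, n j.+1)) :
  (exists c : seq (nat * nat), is_ecycle k A c) ->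
  exists B : forall j : nat, 'M[R]_(n j, n j.+1),
    (forall j, (j < k)%N -> qual_class (A j) (B j)) /\
    ~ P0_matrix (castmx (erefl (n 0%N), hnk) (chain B k)).
Proof.
move=> [c hc].
have [d d0 hd] := poly_cont 0 (pp hk hc hnk) (@ltr01 R).
have e0 : 0 < d / 2 by rewrite divr_gt0.
have hlt : (pp hk hc hnk).[d / 2] < 0.
  have := hd (d / 2); rewrite subr0 gtr0_norm // ltr_pdivrMr // ltr_pMr // ltr1n.
  move=> /(_ isT); rewrite pp0 ltr_distl => /andP[_].
  by rewrite addrC subrr.
exists (Bm k A c (d / 2)); split.
  move=> j _ r s; rewrite mxE sgrM; case: ifP => _; rewrite ?sgr1 ?(gtr0_sg e0) mul1r sgr_id //.
move=> hP; have := hP (S hk hc); rewrite -pp_eval.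
by rewrite leNgt hlt.
Qed.
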